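(* Let $f:\mathbb{R}\to\mathbb{R}$ be Abel continuous, and let $(p_n)$ be a sequence of real numbers which is slowly oscillating and Abel convergent. Then $(f(p_n))$ is a convergent sequence.
   Context: A sequence $(p_n)$ of real numbers is Abel convergent to $\ell$ if $\sum_{k=0}^{\infty}p_k x^k$ converges for every $0\le x<1$ and $\lim_{x\to 1^-}(1-x)\sum_{k=0}^{\infty}p_k x^k=\ell$. $f$ is Abel continuous if for every sequence $(p_n)$ Abel convergent to some $\ell$, $(f(p_n))$ is Abel convergent to $f(\ell)$. A sequence $(p_n)$ is slowly oscillating if for every $\varepsilon>0$ there exist $\delta>0$ and a positive integer $N$ such that $|p_m-p_n|<\varepsilon$ whenever $n\ge N$ and $n\le m\le(1+\delta)n$. *)

(* Defs.v *)
From Stdlib Require Import Reals.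
From Coquelicot Require Import Coquelicot.
Open Scope R_scope.

Definition abel_convergent (p : nat -> R) (l : R) : Prop :=
  (forall x : R, 0 <= x < 1 -> ex_series (fun k => p k * x ^ k)) /\
  filterlim (fun x => (1 - x) * Series (fun k => p k * x ^ k))
            (at_left 1) (locally l).

Definition abel_continuous (f : R -> R) : Prop :=
  forall (p : nat -> R) (l : R),
    abel_convergent p l -> abel_convergent (fun n => f (p n)) (f l).

Definition slowly_oscillating (p : nat -> R) : Prop :=
  forall eps : R, 0 < eps ->
    exists delta : R, 0 < delta /\
    exists N : nat, (0 < N)%nat /\
      forall n m : nat, (N <= n)%nat -> (n <= m)%nat ->
        INR m <= (1 + delta) * INR n -> Rabs (p m - p n) < eps.

(* Main.v *)
Require Import Defs.
From Stdlib Require Import Reals Lra Lia Arith.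
From Coquelicot Require Import Coquelicot.
From Stdlib Require Import Classical ClassicalEpsilon.
Require Import Defs.
Open Scope R_scope.

Lemma series_lim (a : nat -> R) l : is_series a l -> is_lim_seq (sum_n a) l.
Proof. intro H. exact H. Qed.

Lemma partial_le_Series (a : nat -> R) (N : nat) :
  (forall k, 0 <= a k) -> ex_series a -> sum_n a N <= Series a.
Proof.
  intros Hp He. apply is_lim_seq_incr_compare.
  - apply Series_correct in He. exact He.
  - intro n. rewrite sum_Sn. unfold plus; simpl. specialize (Hp (S n)). lra.
Qed.

Lemma exp_pow_nat (a : R) (k : nat) : exp a ^ k = exp (INR k * a).
Proof.
  induction k as [|k IH].
  - simpl. rewrite Rmult_0_l, exp_0. reflexivity.
  - rewrite <- tech_pow_Rmult, IH, <- exp_plus, S_INR. f_equal; ring.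
Qed.

Lemma one_minus_exp_lower (b : R) : 0 < b <= 1 -> b / 2 <= 1 - exp (- b).
Proof.
  intros [H1 H2].
  assert (He : 1 + b <= exp b) by apply exp_ineq1_le.
  rewrite exp_Ropp.
  assert (0 < exp b) by apply exp_pos.
  assert (/ exp b <= / (1 + b)) by (apply Rinv_le_contravar; lra).
  assert (b / 2 <= 1 - / (1 + b)).
  { replace (1 - / (1 + b)) with (b / (1 + b)) by (field; lra).
    unfold Rdiv. apply Rmult_le_compat_l; [lra|].
    apply Rinv_le_contravar; lra. }
  lra.
Qed.

Lemma one_minus_exp_upper (b : R) : 1 - exp (- b) <= b.
Proof. pose proof (exp_ineq1_le (- b)). lra. Qed.

Lemma ln2_bounds : / 2 < ln 2 < 1.
Proof.
  split. apply ln_lt_2.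
  rewrite <- ln_exp with 1. apply ln_increasing; [lra|].
  pose proof (exp_ineq1 1 ltac:(lra)). lra.
Qed.

Lemma ballR (x e y : R) : ball x e y <-> Rabs (y - x) < e.
Proof. reflexivity. Qed.

Lemma at_left_intro (F : R -> R) (l : R) :
  (forall eps, 0 < eps -> exists del, 0 < del /\
     forall x, 1 - del < x < 1 -> Rabs (F x - l) < eps) ->
  filterlim F (at_left 1) (locally l).
Proof.
  intro H. apply filterlim_locally. intros [e He].
  destruct (H e He) as [d [Hd Hx]].
  exists (mkposreal d Hd). intros y Hy Hlt. apply ballR. apply Hx.
  change (Rabs (y - 1) < d) in Hy. apply Rabs_def2 in Hy. destruct Hy. lra.
Qed.

Lemma at_left_elim (F : R -> R) (l : R) :
  filterlim F (at_left 1) (locally l) ->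
  forall eps, 0 < eps -> exists del, 0 < del /\
     forall x, 1 - del < x < 1 -> Rabs (F x - l) < eps.
Proof.
  intros H e He. apply filterlim_locally with (eps := mkposreal e He) in H.
  destruct H as [[d Hd] Hx]. exists d. split; [exact Hd|].
  intros x Hx1. apply ballR. apply Hx; [|lra]. change (Rabs (x - 1) < d).
  rewrite Rabs_left; lra.
Qed.

Lemma lim_seq_intro (u : nat -> R) (l : R) :
  (forall eps, 0 < eps -> exists N, forall n, (N <= n)%nat -> Rabs (u n - l) < eps) ->
  is_lim_seq u l.
Proof.
  intro H. apply is_lim_seq_spec. intros [e He]. destruct (H e He) as [N HN].
  exists N. exact HN.
Qed.

Lemma lim_seq_elim (u : nat -> R) (l : R) :
  is_lim_seq u l ->
  forall eps, 0 < eps -> exists N, forall n, (N <= n)%nat -> Rabs (u n - l) < eps.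
Proof.
  intros H e He. apply is_lim_seq_spec in H. destruct (H (mkposreal e He)) as [N HN].
  exists N. exact HN.
Qed.

Lemma pow_le1 (x : R) (k : nat) : 0 <= x <= 1 -> x ^ k <= 1.
Proof.
  intro H. induction k as [|k IH]; simpl; [lra|].
  assert (0 <= x ^ k) by (apply pow_le; lra). nra.
Qed.

Lemma Rabs_norm (x : R) : norm x = Rabs x.
Proof. reflexivity. Qed.

Lemma ex_series_ext_R (a b : nat -> R) :
  (forall n, a n = b n) -> ex_series a -> ex_series b.
Proof. intros H Ha. apply (ex_series_ext (K:=R_AbsRing) (V:=R_NormedModule) a b H Ha). Qed.

Lemma ex_series_le_R (a b : nat -> R) :
  (forall n, Rabs (a n) <= b n) -> ex_series b -> ex_series a.
Proof.
  intros H Hb. apply (ex_series_le (K:=R_AbsRing) (V:=R_CompleteNormedModule)) with b; auto.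
Qed.

Lemma sum_n_const_le (a : nat -> R) (c : R) (N : nat) :
  (forall k, a k <= c) -> sum_n a N <= INR (S N) * c.
Proof.
  intro H. rewrite <- sum_n_const. induction N as [|N IH].
  - rewrite !sum_O. apply H.
  - rewrite !sum_Sn. unfold plus; simpl. specialize (H (S N)). lra.
Qed.

Lemma term_le_sum (a : nat -> R) (N k : nat) :
  (forall i, 0 <= a i) -> (k <= N)%nat -> a k <= sum_n a N.
Proof.
  intros Hp Hk. induction N as [|N IH].
  - assert (k = 0)%nat by lia. subst. rewrite sum_O. lra.
  - rewrite sum_Sn. unfold plus; simpl.
    destruct (Nat.eq_dec k (S N)) as [->|Hne].
    + assert (0 <= sum_n a N).
      { clear IH Hk. induction N. rewrite sum_O. apply Hp.
        rewrite sum_Sn. unfold plus; simpl. specialize (Hp (S N)). lra. }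
      lra.
    + specialize (IH ltac:(lia)). specialize (Hp (S N)). lra.
Qed.

Lemma conv_bounded (q : nat -> R) (l : R) :
  is_lim_seq q l -> exists B, forall k, Rabs (q k) <= B.
Proof.
  intro H. destruct (lim_seq_elim q l H 1 ltac:(lra)) as [N HN].
  exists (Rabs l + 1 + sum_n (fun i => Rabs (q i)) N).
  assert (Hs : 0 <= sum_n (fun i => Rabs (q i)) N).
  { eapply Rle_trans; [|apply (term_le_sum _ N 0)]; [apply Rabs_pos| |lia].
    intro; apply Rabs_pos. }
  intro k. destruct (le_lt_dec N k) as [Hk|Hk].
  - specialize (HN k Hk).
    pose proof (Rabs_triang_inv (q k) l). pose proof (Rabs_triang (q k - l) l).
    replace (q k - l + l) with (q k) in H1 by ring. pose proof (Rabs_pos l). lra.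
  - pose proof (term_le_sum (fun i => Rabs (q i)) N k ltac:(intro; apply Rabs_pos) ltac:(lia)).
    simpl in H0. pose proof (Rabs_pos l). lra.
Qed.

Lemma ex_series_geom_bound (q : nat -> R) (B x : R) :
  (forall k, Rabs (q k) <= B) -> 0 <= x < 1 -> ex_series (fun k => q k * x ^ k).
Proof.
  intros HB Hx. apply ex_series_le_R with (b := fun k => B * x ^ k).
  - intro k. rewrite Rabs_mult, (Rabs_right (x ^ k)).
    + apply Rmult_le_compat_r; [apply pow_le; lra| apply HB].
    + apply Rle_ge, pow_le; lra.
  - exists (B * / (1 - x)). apply (is_series_scal B (fun k => x ^ k)).
    apply is_series_geom. rewrite Rabs_right; lra.
Qed.

Lemma lim_series (a : nat -> R) (l : R) : is_lim_seq (sum_n a) l -> is_series a l.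
Proof. intro H. exact H. Qed.

Lemma finite_is_series (c : R) (K : nat) :
  is_series (fun k => if (k <=? K)%nat then c else 0) (INR (S K) * c).
Proof.
  apply lim_series. apply (is_lim_seq_ext_loc (fun _ => INR (S K) * c)).
  - exists K. intros n Hn. induction Hn.
    + rewrite <- sum_n_const. apply sum_n_ext_loc. intros i Hi.
      apply Nat.leb_le in Hi. rewrite Hi. reflexivity.
    + rewrite sum_Sn, <- IHHn. unfold plus. cbn -[Nat.leb INR].
      destruct (S m <=? K)%nat eqn:Hf; [apply Nat.leb_le in Hf; lia|]. ring.
  - apply is_lim_seq_const.
Qed.

Lemma geom_series (x : R) : 0 <= x < 1 -> is_series (fun k => x ^ k) (/ (1 - x)).
Proof. intro. apply is_series_geom. rewrite Rabs_right; lra. Qed.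

Lemma abelian (q : nat -> R) (l : R) : is_lim_seq q l -> abel_convergent q l.
Proof.
  intro Hq. destruct (conv_bounded q l Hq) as [B HB].
  assert (Hex : forall x, 0 <= x < 1 -> ex_series (fun k => q k * x ^ k)).
  { intros x Hx. apply (ex_series_geom_bound q B x HB Hx). }
  split; [exact Hex|].
  apply at_left_intro. intros e He.
  destruct (lim_seq_elim q l Hq (e/2) ltac:(lra)) as [K HK].
  set (M := Rabs l + B + 1).
  assert (HM : 0 < M) by (unfold M; pose proof (Rabs_pos l); pose proof (Rabs_pos (q 0%nat)); specialize (HB 0%nat); lra).
  exists (Rmin 1 (e / 2 / (INR (S K) * M + 1))). split.
  { apply Rmin_pos; [lra|]. apply Rdiv_lt_0_compat; [lra|].
    pose proof (pos_INR (S K)). nra. }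
  intros x Hx.
  assert (Hx0 : 0 <= x < 1).
  { pose proof (Rmin_l 1 (e / 2 / (INR (S K) * M + 1))). lra. }
  assert (Hd : (1 - x) * (INR (S K) * M + 1) < e / 2).
  { pose proof (Rmin_r 1 (e / 2 / (INR (S K) * M + 1))).
    assert (0 < INR (S K) * M + 1) by (pose proof (pos_INR (S K)); nra).
    assert (1 - x < e / 2 / (INR (S K) * M + 1)) by lra.
    apply (Rmult_lt_compat_r (INR (S K) * M + 1)) in H1; [|lra].
    unfold Rdiv in H1 at 1. rewrite Rmult_assoc, Rinv_l in H1; lra. }
  set (g := fun k => (q k - l) * x ^ k).
  assert (Heq : (1 - x) * Series (fun k => q k * x ^ k) - l = (1 - x) * Series g).
  { unfold g. rewrite (Series_ext (fun k => (q k - l) * x ^ k) (fun k => q k * x ^ k - l * x ^ k)) by (intro; ring).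
    rewrite Series_minus; [|apply Hex; lra|].
    2:{ apply (ex_series_scal_l l (fun k => x ^ k)). eexists; apply geom_series; lra. }
    rewrite Series_scal_l. rewrite (is_series_unique (pow x) _ (geom_series x Hx0)).
    field. lra. }
  rewrite Heq.
  set (b := fun k => (if (k <=? K)%nat then M else 0) + e / 2 * x ^ k).
  assert (Hb : is_series b (INR (S K) * M + e / 2 * / (1 - x))).
  { apply (is_series_plus (fun k => if (k <=? K)%nat then M else 0) (fun k => e / 2 * x ^ k)).
    apply finite_is_series. apply (is_series_scal (e/2) (fun k => x ^ k)). apply geom_series; lra. }
  assert (Hgb : forall k, Rabs (g k) <= b k).
  { intro k. unfold g, b. rewrite Rabs_mult, (Rabs_right (x ^ k)) by (apply Rle_ge, pow_le; lra).
    assert (0 <= x ^ k <= 1) by (split; [apply pow_le; lra| apply pow_le1; lra]).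
    destruct (le_lt_dec K k) as [Hk|Hk].
    - specialize (HK k Hk). assert (0 <= (if (k <=? K)%nat then M else 0)) by (destruct (k <=? K)%nat; lra).
      assert (Rabs (q k - l) * x ^ k <= e / 2 * x ^ k) by (apply Rmult_le_compat_r; lra). lra.
    - assert (Hk' : (k <=? K)%nat = true) by (apply Nat.leb_le; lia). rewrite Hk'.
      assert (Rabs (q k - l) <= M).
      { unfold M. pose proof (Rabs_triang (q k) (- l)). rewrite Rabs_Ropp in H0. specialize (HB k). unfold Rminus. lra. }
      assert (Rabs (q k - l) * x ^ k <= M) by (pose proof (Rabs_pos (q k - l)); nra).
      assert (0 <= e / 2 * x ^ k) by (apply Rmult_le_pos; lra). lra. }
  assert (Habs : ex_series (fun k => Rabs (g k))).
  { apply ex_series_le_R with b. intro k. rewrite Rabs_Rabsolu. apply Hgb. eexists; exact Hb. }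
  assert (H1 : Rabs (Series g) <= INR (S K) * M + e / 2 * / (1 - x)).
  { eapply Rle_trans. apply Series_Rabs, Habs. rewrite <- (is_series_unique _ _ Hb).
    apply Series_le. intro k. split; [apply Rabs_pos | apply Hgb]. eexists; exact Hb. }
  rewrite Rabs_mult, Rabs_right by lra.
  assert ((1 - x) * Rabs (Series g) <= (1 - x) * (INR (S K) * M) + e / 2).
  { replace ((1 - x) * (INR (S K) * M) + e / 2) with ((1 - x) * (INR (S K) * M + e / 2 * / (1 - x))) by (field; lra).
    apply Rmult_le_compat_l; lra. }
  lra.
Qed.

Lemma Series_nonneg (a : nat -> R) : (forall k, 0 <= a k) -> ex_series a -> 0 <= Series a.
Proof.
  intros H He. pose proof (partial_le_Series a 0 H He). rewrite sum_O in H0.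
  specialize (H 0%nat). lra.
Qed.

Lemma abel_lower (g : nat -> R) (L c : R) :
  abel_convergent g L -> (forall k, c <= g k) -> c <= L.
Proof.
  intros [Hex Hlim] Hc. destruct (Rle_or_lt c L) as [H|H]; [exact H|exfalso].
  destruct (at_left_elim _ _ Hlim (c - L) ltac:(lra)) as [d [Hd Hx]].
  set (x := Rmax 0 (1 - d / 2)).
  assert (Hx0 : 0 <= x < 1 /\ 1 - d < x).
  { unfold x. pose proof (Rmax_l 0 (1 - d/2)). pose proof (Rmax_r 0 (1 - d/2)).
    destruct (Rle_dec 0 (1 - d/2)).
    - rewrite Rmax_right by lra. lra.
    - rewrite Rmax_left by lra. lra. }
  specialize (Hx x ltac:(lra)).
  assert (Hge : c / (1 - x) <= Series (fun k => g k * x ^ k)).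
  { assert (Hs : 0 <= Series (fun k => (g k - c) * x ^ k)).
    { apply Series_nonneg.
      - intro k. apply Rmult_le_pos; [specialize (Hc k); lra| apply pow_le; lra].
      - apply ex_series_ext_R with (a := fun k => g k * x ^ k - c * x ^ k).
        + intro; ring.
        + apply (ex_series_minus (fun k => g k * x ^ k) (fun k => c * x ^ k)).
          apply Hex; lra. apply (ex_series_scal_l c (fun k => x ^ k)). eexists; apply geom_series; lra. }
    rewrite (Series_ext (fun k => (g k - c) * x ^ k) (fun k => g k * x ^ k - c * x ^ k)) in Hs by (intro; ring).
    rewrite Series_minus in Hs; [|apply Hex; lra|].
    2:{ apply (ex_series_scal_l c (fun k => x ^ k)). eexists; apply geom_series; lra. }
    rewrite Series_scal_l, (is_series_unique (pow x) _ (geom_series x ltac:(lra))) in Hs.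
    unfold Rdiv. lra. }
  assert (c <= (1 - x) * Series (fun k => g k * x ^ k)).
  { apply (Rmult_le_compat_l (1 - x)) in Hge; [|lra].
    replace ((1 - x) * (c / (1 - x))) with c in Hge by (field; lra). exact Hge. }
  apply Rabs_def2 in Hx. lra.
Qed.

Lemma abel_opp (g : nat -> R) (L : R) :
  abel_convergent g L -> abel_convergent (fun k => - g k) (- L).
Proof.
  intros [Hex Hlim]. split.
  - intros x Hx. apply ex_series_ext_R with (a := fun k => (-1) * (g k * x ^ k)).
    + intro; ring.
    + apply (ex_series_scal_l (-1) (fun k => g k * x ^ k)). apply Hex, Hx.
  - apply at_left_intro. intros e He.
    destruct (at_left_elim _ _ Hlim e He) as [d [Hd Hx]]. exists d. split; [exact Hd|].
    intros x Hx1. specialize (Hx x Hx1).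
    rewrite (Series_ext (fun k => - g k * x ^ k) (fun k => (-1) * (g k * x ^ k))) by (intro; ring).
    rewrite Series_scal_l.
    replace ((1 - x) * (-1 * Series (fun k => g k * x ^ k)) - - L)
      with (- ((1 - x) * Series (fun k => g k * x ^ k) - L)) by ring.
    rewrite Rabs_Ropp. exact Hx.
Qed.

Lemma subseq_choice (P : nat -> Prop) :
  (forall N, exists n, (N <= n)%nat /\ P n) ->
  exists phi : nat -> nat, forall k, (k <= phi k)%nat /\ P (phi k).
Proof.
  intro H. exists (fun k => proj1_sig (constructive_indefinite_description _ (H k))).
  intro k. exact (proj2_sig (constructive_indefinite_description _ (H k))).
Qed.

Lemma f_lim (f : R -> R) (p : nat -> R) (l : R) :
  abel_continuous f -> is_lim_seq p l -> is_lim_seq (fun n => f (p n)) (f l).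
Proof.
  intros Hf Hp. apply NNPP. intro Hn.
  assert (Hex : exists e, 0 < e /\ forall N, exists n, (N <= n)%nat /\ e <= Rabs (f (p n) - f l)).
  { apply NNPP. intro Hc. apply Hn. apply lim_seq_intro. intros e He.
    apply NNPP. intro HN. apply Hc. exists e. split; [exact He|]. intro N.
    apply NNPP. intro Hm. apply HN. exists N. intros n Hnn.
    apply Rnot_le_lt. intro Hle. apply Hm. exists n. split; assumption. }
  destruct Hex as [e [He HN]].
  assert (Hcase : (forall N, exists n, (N <= n)%nat /\ f l + e <= f (p n)) \/
                  (forall N, exists n, (N <= n)%nat /\ f (p n) <= f l - e)).
  { destruct (classic (forall N, exists n, (N <= n)%nat /\ f l + e <= f (p n))) as [H|H]; [left; exact H|right].
    apply not_all_ex_not in H. destruct H as [N0 HN0].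
    intro N. destruct (HN (max N N0)) as [n [Hn1 Hn2]]. exists n. split; [lia|].
    destruct (Rle_or_lt (f l + e) (f (p n))) as [H1|H1].
    - exfalso. apply HN0. exists n. split; [lia|exact H1].
    - unfold Rabs in Hn2. destruct (Rcase_abs (f (p n) - f l)); lra. }
  assert (Hsub : forall phi : nat -> nat, (forall k, (k <= phi k)%nat) ->
            abel_convergent (fun k => f (p (phi k))) (f l)).
  { intros phi Hphi. apply Hf. apply abelian. apply lim_seq_intro. intros e' He'.
    destruct (lim_seq_elim p l Hp e' He') as [N HN']. exists N. intros n Hnn.
    apply HN'. specialize (Hphi n). lia. }
  destruct Hcase as [H|H].
  - destruct (subseq_choice _ H) as [phi Hphi].
    assert (Hc := abel_lower _ _ (f l + e) (Hsub phi (fun k => proj1 (Hphi k))) (fun k => proj2 (Hphi k))).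
    lra.
  - destruct (subseq_choice _ H) as [phi Hphi].
    assert (Hc := abel_lower _ _ (- (f l - e)) (abel_opp _ _ (Hsub phi (fun k => proj1 (Hphi k))))).
    assert (- (f l - e) <= - f l).
    { apply Hc. intro k. specialize (Hphi k). lra. }
    lra.
Qed.

Definition xx (n : nat) : R := exp (- (ln 2 / INR n)).
Definition kern (r n k : nat) : R := (4 * xx n ^ k * (1 - xx n ^ k)) ^ r.
Definition coef (r i : nat) : R := 4 ^ r * Binomial.C r i * (-1) ^ i.

Lemma ln2_pos : 0 < ln 2.
Proof. pose proof ln2_bounds. lra. Qed.

Lemma xx_bounds (n : nat) : (1 <= n)%nat ->
  0 < xx n < 1 /\ ln 2 / (2 * INR n) <= 1 - xx n <= ln 2 / INR n.
Proof.
  intro Hn. assert (HnR : 1 <= INR n) by (apply (le_INR 1); lia).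
  pose proof ln2_bounds.
  assert (Hb : 0 < ln 2 / INR n <= 1).
  { split. apply Rdiv_lt_0_compat; lra.
    apply Rmult_le_reg_r with (INR n); [lra|]. unfold Rdiv. rewrite Rmult_assoc, Rinv_l by lra. lra. }
  unfold xx. split.
  - split. apply exp_pos. rewrite <- exp_0. apply exp_increasing. lra.
  - split.
    + pose proof (one_minus_exp_lower _ Hb).
      replace (ln 2 / (2 * INR n)) with (ln 2 / INR n / 2) by (field; lra). lra.
    + apply one_minus_exp_upper.
Qed.

Lemma bernoulli_pow (x : R) (j : nat) : 0 <= x -> 1 - INR j * (1 - x) <= x ^ j.
Proof.
  intro Hx. induction j as [|j IH]; [simpl; lra|].
  rewrite S_INR. change (x ^ S j) with (x * x ^ j).
  destruct (Rle_or_lt x 1) as [H1|H1].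
  - assert (x * (1 - INR j * (1 - x)) <= x * x ^ j) by (apply Rmult_le_compat_l; lra).
    assert (0 <= INR j * ((1 - x) * (1 - x))) by (apply Rmult_le_pos; [apply pos_INR|nra]).
    nra.
  - assert (1 <= x ^ j).
    { clear IH. induction j; simpl; [lra|]. nra. }
    pose proof (pos_INR j). nra.
Qed.

Lemma pow_le_self (x : R) (j : nat) : 0 <= x <= 1 -> (1 <= j)%nat -> x ^ j <= x.
Proof.
  intros Hx Hj. destruct j as [|j]; [lia|]. simpl.
  pose proof (pow_le1 x j Hx). pose proof (pow_le x j (proj1 Hx)). nra.
Qed.

Lemma kern_expand (r n k : nat) :
  kern r n k = sum_f_R0 (fun i => coef r i * (xx n ^ (r + i)) ^ k) r.
Proof.
  unfold kern, coef. set (u := xx n ^ k).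
  replace (4 * u * (1 - u)) with ((4 * u) * (- u + 1)) by ring.
  rewrite Rpow_mult_distr, binomial, scal_sum.
  apply sum_eq. intros i Hi.
  rewrite <- pow_mult. replace ((r + i) * k)%nat with (k * (r + i))%nat by lia.
  rewrite pow_mult. fold u. rewrite pow_add, Rpow_mult_distr.
  replace (- u) with ((-1) * u) by ring.
  rewrite Rpow_mult_distr, pow1. ring.
Qed.

Lemma is_series_plus_R (a b : nat -> R) (la lb : R) :
  is_series a la -> is_series b lb -> is_series (fun k => a k + b k) (la + lb).
Proof. intros Ha Hb. exact (is_series_plus (K:=R_AbsRing) (V:=R_NormedModule) a b la lb Ha Hb). Qed.

Lemma is_series_scal_R (c : R) (a : nat -> R) (la : R) :
  is_series a la -> is_series (fun k => c * a k) (c * la).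
Proof. intros Ha. exact (is_series_scal (K:=R_AbsRing) (V:=R_NormedModule) c a la Ha). Qed.

Lemma is_series_ext_R (a b : nat -> R) (l : R) :
  (forall n, a n = b n) -> is_series a l -> is_series b l.
Proof. intros H Ha. exact (is_series_ext (K:=R_AbsRing) (V:=R_NormedModule) a b l H Ha). Qed.

Lemma term_series (p : nat -> R) (l y : R) :
  0 <= y < 1 -> ex_series (fun k => p k * y ^ k) ->
  is_series (fun k => (p k - l) * y ^ k) (Series (fun k => p k * y ^ k) - l * / (1 - y)).
Proof.
  intros Hy He.
  apply (is_series_ext_R (fun k => p k * y ^ k + (-1) * (l * y ^ k))).
  { intro k. ring. }
  replace (Series (fun k => p k * y ^ k) - l * / (1 - y))
    with (Series (fun k => p k * y ^ k) + (-1) * (l * / (1 - y))) by ring.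
  apply is_series_plus_R. apply Series_correct, He.
  apply is_series_scal_R, is_series_scal_R, geom_series, Hy.
Qed.

Lemma is_series_fsum (a : nat -> nat -> R) (L : nat -> R) (m : nat) :
  (forall i, (i <= m)%nat -> is_series (a i) (L i)) ->
  is_series (fun k => sum_f_R0 (fun i => a i k) m) (sum_f_R0 L m).
Proof.
  induction m as [|m IH]; intro H.
  - simpl. apply H. lia.
  - simpl. apply (is_series_plus_R (fun k => sum_f_R0 (fun i => a i k) m) (a (S m))).
    apply IH. intros; apply H; lia. apply H; lia.
Qed.

Lemma lim_fsum (F : nat -> nat -> R) (m : nat) :
  (forall i, (i <= m)%nat -> is_lim_seq (F i) 0) ->
  is_lim_seq (fun n => sum_f_R0 (fun i => F i n) m) 0.
Proof.
  induction m as [|m IH]; intro H.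
  - simpl. apply H; lia.
  - simpl. replace (Finite 0) with (Finite (0 + 0)) by (f_equal; ring).
    apply is_lim_seq_plus'. apply IH; intros; apply H; lia. apply H; lia.
Qed.

Definition AbelM (p : nat -> R) (y : R) : R := (1 - y) * Series (fun k => p k * y ^ k).

Lemma term_lim (p : nat -> R) (l : R) (j : nat) :
  abel_convergent p l -> (1 <= j)%nat ->
  is_lim_seq (fun n => (1 - xx n) * (Series (fun k => p k * (xx n ^ j) ^ k) - l * / (1 - xx n ^ j))) 0.
Proof.
  intros [Hex Hlim] Hj. apply lim_seq_intro. intros e He.
  destruct (at_left_elim _ _ Hlim e He) as [d [Hd Hx]].
  destruct (nfloor_ex (INR j / d) ltac:(apply Rdiv_le_0_compat; [apply pos_INR|lra])) as [N0 HN0].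
  exists (S N0). intros n Hn.
  assert (Hn1 : (1 <= n)%nat) by lia.
  destruct (xx_bounds n Hn1) as [[Hx0 Hx1] [Hlo Hhi]].
  set (y := xx n ^ j).
  assert (Hy1 : y <= xx n) by (apply pow_le_self; [lra|exact Hj]).
  assert (Hy0 : 0 < y) by (apply pow_lt; lra).
  assert (Hyb : 1 - INR j * (1 - xx n) <= y) by (apply bernoulli_pow; lra).
  assert (HnR : INR j / d < INR n).
  { apply Rlt_le_trans with (INR N0 + 1); [lra|]. rewrite <- S_INR. apply le_INR. lia. }
  assert (Hyd : 1 - d < y).
  { assert (INR j * (1 - xx n) < d).
    { pose proof ln2_bounds.
      assert (0 <= INR j / d) by (apply Rdiv_le_0_compat; [apply pos_INR|lra]).
      assert (0 < INR n) by lra.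
      assert (1 - xx n < 1 / INR n).
      { apply Rle_lt_trans with (ln 2 / INR n); [exact Hhi|].
        unfold Rdiv. apply Rmult_lt_compat_r; [apply Rinv_0_lt_compat|]; lra. }
      assert (INR j < d * INR n).
      { apply Rmult_lt_compat_r with (r := d) in HnR; [|lra].
        unfold Rdiv in HnR. rewrite Rmult_assoc, Rinv_l in HnR by lra. lra. }
      assert (INR j * (1 - xx n) <= INR j * (1 / INR n)) by (apply Rmult_le_compat_l; [apply pos_INR|lra]).
      assert (INR j * (1 / INR n) < d).
      { apply Rmult_lt_reg_r with (INR n); [lra|]. unfold Rdiv. rewrite Rmult_assoc, Rmult_1_l, Rinv_l by lra. lra. }
      lra. }
    lra. }
  specialize (Hx y ltac:(lra)).
  rewrite Rminus_0_r.
  replace ((1 - xx n) * (Series (fun k => p k * y ^ k) - l * / (1 - y)))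
    with ((1 - xx n) / (1 - y) * ((1 - y) * Series (fun k => p k * y ^ k) - l)) by (field; lra).
  rewrite Rabs_mult.
  assert (Hr : Rabs ((1 - xx n) / (1 - y)) <= 1).
  { rewrite Rabs_right. apply Rmult_le_reg_r with (1 - y); [lra|].
    unfold Rdiv. rewrite Rmult_assoc, Rinv_l by lra. lra.
    apply Rle_ge, Rdiv_le_0_compat; lra. }
  pose proof (Rabs_pos ((1 - xx n) / (1 - y))).
  pose proof (Rabs_pos ((1 - y) * Series (fun k => p k * y ^ k) - l)). nra.
Qed.

Lemma S_series (p : nat -> R) (l : R) (r n : nat) :
  abel_convergent p l -> (1 <= r)%nat -> (1 <= n)%nat ->
  is_series (fun k => kern r n k * (p k - l))
    (sum_f_R0 (fun i => coef r i * (Series (fun k => p k * (xx n ^ (r + i)) ^ k)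
                                      - l * / (1 - xx n ^ (r + i)))) r).
Proof.
  intros [Hex Hlim] Hr Hn.
  destruct (xx_bounds n Hn) as [[Hx0 Hx1] _].
  apply (is_series_ext_R (fun k => sum_f_R0 (fun i => coef r i * ((p k - l) * (xx n ^ (r + i)) ^ k)) r)).
  { intro k. rewrite kern_expand. rewrite Rmult_comm, scal_sum. apply sum_eq. intros; ring. }
  apply is_series_fsum. intros i Hi.
  apply (is_series_scal_R (coef r i) (fun k => (p k - l) * (xx n ^ (r + i)) ^ k)).
  assert (Hy : 0 <= xx n ^ (r + i) < 1).
  { split. apply pow_le; lra. eapply Rle_lt_trans. apply pow_le_self; [lra|lia]. lra. }
  apply term_series. exact Hy. apply Hex, Hy.
Qed.

Lemma S_lim (p : nat -> R) (l : R) (r : nat) :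
  abel_convergent p l -> (1 <= r)%nat ->
  is_lim_seq (fun n => (1 - xx n) * Series (fun k => kern r n k * (p k - l))) 0.
Proof.
  intros Ha Hr.
  apply (is_lim_seq_ext_loc (fun n => sum_f_R0 (fun i => coef r i *
      ((1 - xx n) * (Series (fun k => p k * (xx n ^ (r + i)) ^ k) - l * / (1 - xx n ^ (r + i))))) r)).
  { exists 1%nat. intros n Hn. rewrite (is_series_unique _ _ (S_series p l r n Ha Hr Hn)).
    rewrite scal_sum. apply sum_eq. intros; ring. }
  apply lim_fsum. intros i Hi.
  replace (Finite 0) with (Rbar_mult (coef r i) 0) by (simpl; f_equal; ring).
  apply is_lim_seq_scal_l. apply term_lim; [exact Ha|lia].
Qed.

Lemma half_floor (t : R) : 1 <= t -> exists s : nat, t / 2 <= INR s <= t.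
Proof.
  intro Ht. destruct (nfloor_ex t ltac:(lra)) as [s Hs]. exists s.
  split; [|lra]. destruct (Rle_or_lt 2 t).
  - lra.
  - assert (INR s <> 0 -> 1 <= INR s).
    { intro Hne. destruct s; [simpl in Hne; lra|]. rewrite S_INR. pose proof (pos_INR s). lra. }
    destruct s. simpl in Hs. lra. rewrite S_INR in *. pose proof (pos_INR s). lra.
Qed.

Section Chain.
Variables (p : nat -> R) (eps del : R) (N : nat).
Hypothesis Heps : 0 < eps.
Hypothesis Hdel : 0 < del.
Hypothesis HW : forall n m : nat, (N <= n)%nat -> (n <= m)%nat ->
  INR m <= (1 + del) * INR n -> Rabs (p m - p n) < eps.

Lemma chain_j (a s : nat) : (N <= a)%nat -> INR s <= del * INR a ->
  forall j k, (a <= k)%nat -> (k <= a + j * s)%nat -> Rabs (p k - p a) <= INR j * eps.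
Proof.
  intros Ha Hs j. induction j as [|j IH]; intros k Hk1 Hk2.
  - assert (k = a) by lia. subst. rewrite Rminus_diag, Rabs_R0. simpl. lra.
  - rewrite S_INR.
    destruct (le_lt_dec k (a + j * s)) as [H1|H1].
    + specialize (IH k Hk1 H1). lra.
    + destruct j as [|j].
      * assert (INR k <= (1 + del) * INR a).
        { assert (k <= a + s)%nat by lia. apply le_INR in H. rewrite plus_INR in H. lra. }
        specialize (HW a k Ha Hk1 H). simpl. lra.
      * set (k' := (k - s)%nat).
        assert (Hk' : (a <= k')%nat /\ (k' <= a + S j * s)%nat) by (unfold k'; simpl in *; lia).
        specialize (IH k' (proj1 Hk') (proj2 Hk')).
        assert (INR k <= (1 + del) * INR k').
        { assert (k = k' + s)%nat by (unfold k'; simpl in *; lia).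
          apply (f_equal INR) in H. rewrite plus_INR in H.
          assert (INR a <= INR k') by (apply le_INR; lia). nra. }
        assert (Hw := HW k' k ltac:(lia) ltac:(unfold k'; lia) H).
        pose proof (Rabs_triang (p k - p k') (p k' - p a)).
        replace (p k - p k' + (p k' - p a)) with (p k - p a) in H0 by ring.
        lra.
Qed.

Lemma chain (a : nat) : (N <= a)%nat -> 1 <= del * INR a ->
  forall k, (a <= k)%nat -> Rabs (p k - p a) <= eps * (1 + 2 / del * INR k / INR a).
Proof.
  intros Ha Hda k Hk.
  destruct (half_floor (del * INR a) Hda) as [s [Hs1 Hs2]].
  assert (Hs0 : (1 <= s)%nat).
  { destruct s; [simpl in Hs1; lra|lia]. }
  assert (HaR : 0 < INR a).
  { destruct (Rle_or_lt (INR a) 0); [|lra]. nra. }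
  set (q := ((k - a) / s)%nat).
  assert (Hdm := Nat.div_mod (k - a) s ltac:(lia)).
  assert (Hml := Nat.mod_upper_bound (k - a) s ltac:(lia)).
  fold q in Hdm.
  assert (Hkj : (k <= a + S q * s)%nat) by nia.
  assert (H := chain_j a s Ha Hs2 (S q) k Hk Hkj).
  assert (Hq : INR q * INR s <= INR k).
  { rewrite <- mult_INR. apply le_INR. nia. }
  assert (HsR : 0 < INR s) by (apply (lt_INR 0); lia).
  assert (Hq2 : INR q <= 2 / del * INR k / INR a).
  { apply Rmult_le_reg_r with (INR s); [lra|].
    apply Rle_trans with (INR k); [exact Hq|].
    assert (HkR : 0 <= INR k) by apply pos_INR.
    replace (2 / del * INR k / INR a * INR s) with (INR k * (INR s / (del * INR a / 2))) by (field; lra).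
    assert (1 <= INR s / (del * INR a / 2)).
    { apply Rmult_le_reg_r with (del * INR a / 2); [nra|].
      unfold Rdiv at 2. rewrite Rmult_assoc, Rinv_l by nra. lra. }
    nra. }
  rewrite S_INR in H. nra.
Qed.

End Chain.

Lemma u_exp (n k : nat) : xx n ^ k = exp (- (INR k * (ln 2 / INR n))).
Proof. unfold xx. rewrite exp_pow_nat. f_equal. ring. Qed.

Lemma exp_le_inv_le (x y : R) : x <= y -> exp x <= exp y.
Proof. intro H. destruct H as [H|H]. left; apply exp_increasing, H. subst; lra. Qed.

Lemma exp_ln2 : exp (- ln 2) = / 2.
Proof. rewrite exp_Ropp, exp_ln; lra. Qed.

Lemma pow_mono_base (a c : R) (r : nat) : 0 <= a <= c -> a ^ r <= c ^ r.
Proof. intro H. apply pow_incr. exact H. Qed.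

Section Kern.
Variables (n k r : nat).
Hypothesis Hn : (1 <= n)%nat.
Hypothesis Hr : (1 <= r)%nat.

Let b := ln 2 / INR n.
Let u := xx n ^ k.
Let T := 4 * u * (1 - u).

Lemma nR_pos : 1 <= INR n.
Proof. apply (le_INR 1); lia. Qed.

Lemma u_range : 0 < u <= 1.
Proof.
  unfold u. destruct (xx_bounds n Hn) as [[H0 H1] _]. split.
  apply pow_lt; lra. apply pow_le1; lra.
Qed.

Lemma T_alt : T = 1 - (1 - 2 * u) ^ 2.
Proof. unfold T. ring. Qed.

Lemma T_range : 0 <= T <= 1.
Proof. pose proof u_range. rewrite T_alt. split; [|pose proof (pow2_ge_0 (1 - 2 * u)); lra].
  unfold T in *. nra. Qed.

Lemma kern_T : 0 <= kern r n k <= T.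
Proof.
  unfold kern. fold u. fold T. pose proof T_range. split.
  apply pow_le; lra. apply pow_le_self; [lra|exact Hr].
Qed.

Lemma T_le_u : T <= 4 * u.
Proof. pose proof u_range. unfold T. nra. Qed.

Lemma T_le_k : T <= 4 * (INR k / INR n).
Proof.
  pose proof u_range. pose proof nR_pos. pose proof ln2_bounds.
  assert (Hub : 1 - u <= INR k * b).
  { unfold u. rewrite u_exp. apply one_minus_exp_upper. }
  assert (INR k * b <= INR k / INR n).
  { unfold b, Rdiv. rewrite <- Rmult_assoc. rewrite (Rmult_comm (INR k) (ln 2)).
    rewrite Rmult_assoc. pose proof (pos_INR k).
    assert (0 <= INR k * / INR n) by (apply Rmult_le_pos; [lra|left; apply Rinv_0_lt_compat; lra]).
    nra. }
  unfold T. nra.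
Qed.

Lemma u_half : (k <= n)%nat -> / 2 <= u.
Proof.
  intro Hk. unfold u. rewrite u_exp. rewrite <- exp_ln2. pose proof nR_pos.
  apply exp_le_inv_le. apply Ropp_le_contravar.
  unfold Rdiv. rewrite <- Rmult_assoc, (Rmult_comm (INR k)), Rmult_assoc.
  pose proof ln2_pos. assert (INR k <= INR n) by (apply le_INR, Hk).
  assert (INR k * / INR n <= 1).
  { apply Rmult_le_reg_r with (INR n); [lra|]. rewrite Rmult_assoc, Rinv_l by lra. lra. }
  nra.
Qed.

Lemma ku_le_w : INR k / INR n * u <= 2 / ln 2 * exp (- (INR k * (ln 2 / (2 * INR n)))).
Proof.
  unfold u. rewrite u_exp. pose proof nR_pos. pose proof ln2_pos.
  set (t := INR k * (ln 2 / (2 * INR n))).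
  assert (Ht : 0 <= t) by (unfold t; apply Rmult_le_pos; [apply pos_INR| apply Rdiv_le_0_compat; lra]).
  replace (INR k * (ln 2 / INR n)) with (2 * t) by (unfold t; field; lra).
  replace (INR k / INR n) with (2 / ln 2 * t) by (unfold t; field; lra).
  replace (- (2 * t)) with (- t + - t) by ring. rewrite exp_plus.
  assert (t <= exp t) by (pose proof (exp_ineq1_le t); lra).
  assert (t * exp (- t) <= 1).
  { rewrite exp_Ropp. apply Rmult_le_reg_r with (exp t); [apply exp_pos|].
    rewrite Rmult_assoc, Rinv_l by (apply Rgt_not_eq, exp_pos). lra. }
  assert (0 < exp (- t)) by apply exp_pos.
  assert (0 < 2 / ln 2) by (apply Rdiv_lt_0_compat; lra).
  replace (2 / ln 2 * t * (exp (- t) * exp (- t))) with (2 / ln 2 * exp (- t) * (t * exp (- t))) by ring.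
  rewrite <- (Rmult_1_r (2 / ln 2 * exp (- t))) at 2.
  apply Rmult_le_compat_l; [nra|lra].
Qed.

Lemma T_tail (del : R) : 0 < del ->
  ((1 + del) * INR n < INR k \/ (1 + del) * INR k < INR n) ->
  T <= 1 - (ln 2 * del / (2 * (1 + del))) ^ 2.
Proof.
  intros Hd Hc. pose proof nR_pos. pose proof ln2_bounds. pose proof u_range.
  set (e0 := ln 2 * del / (2 * (1 + del))).
  assert (He0 : 0 <= e0) by (unfold e0; apply Rdiv_le_0_compat; nra).
  assert (Hkey : e0 <= Rabs (1 - 2 * u)).
  { destruct Hc as [Hc|Hc].
    -
      assert (Hu : u <= / 2 * exp (- (ln 2 * del))).
      { unfold u. rewrite u_exp. rewrite <- exp_ln2, <- exp_plus. apply exp_le_inv_le.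
        assert (ln 2 * (1 + del) <= INR k * (ln 2 / INR n)).
        { unfold Rdiv. rewrite <- Rmult_assoc, (Rmult_comm (INR k)), Rmult_assoc.
          apply Rmult_le_compat_l; [lra|].
          apply Rmult_le_reg_r with (INR n); [lra|]. rewrite Rmult_assoc, Rinv_l by lra. lra. }
        lra. }
      set (y := ln 2 * del).
      assert (Hy : 0 < y) by (unfold y; nra).
      assert (Hey : y / (1 + y) <= 1 - exp (- y)).
      { rewrite exp_Ropp. assert (1 + y <= exp y) by apply exp_ineq1_le.
        assert (/ exp y <= / (1 + y)) by (apply Rinv_le_contravar; lra).
        replace (y / (1 + y)) with (1 - / (1 + y)) by (field; lra). lra. }
      assert (e0 <= y / (1 + y)).
      { unfold e0. fold y. unfold Rdiv. apply Rmult_le_compat_l; [lra|].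
        apply Rinv_le_contravar; [lra|]. unfold y. nra. }
      rewrite Rabs_right; [|fold y in Hu; lra]. fold y in Hu. lra.
    -
      assert (Hu : exp (- (ln 2 / (1 + del))) <= u).
      { unfold u. rewrite u_exp. apply exp_le_inv_le. apply Ropp_le_contravar.
        unfold Rdiv. rewrite <- Rmult_assoc, (Rmult_comm (INR k)), Rmult_assoc.
        apply Rmult_le_compat_l; [lra|].
        assert (HkR : INR k < INR n / (1 + del)).
        { apply Rmult_lt_reg_r with (1 + del); [lra|]. unfold Rdiv. rewrite Rmult_assoc, Rinv_l by lra. lra. }
        apply Rmult_le_reg_r with (INR n); [lra|]. rewrite Rmult_assoc, Rinv_l by lra.
        replace (/ (1 + del) * INR n) with (INR n / (1 + del)) by (unfold Rdiv; ring). lra. }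
      assert (H2 : 2 * exp (- (ln 2 / (1 + del))) = exp (ln 2 * del / (1 + del))).
      { rewrite <- (exp_ln 2) at 1 by lra. rewrite <- exp_plus. f_equal. field. lra. }
      assert (1 + ln 2 * del / (1 + del) <= exp (ln 2 * del / (1 + del))) by apply exp_ineq1_le.
      assert (e0 <= ln 2 * del / (1 + del)).
      { unfold e0. unfold Rdiv. rewrite Rinv_mult.
        assert (0 <= ln 2 * del * / (1 + del)) by (apply Rmult_le_pos; [nra|left; apply Rinv_0_lt_compat; lra]).
        nra. }
      rewrite Rabs_left1; lra. }
  rewrite T_alt. 
  assert (e0 ^ 2 <= (1 - 2 * u) ^ 2).
  { rewrite <- (pow2_abs (1 - 2 * u)). apply pow_incr. lra. }
  lra.
Qed.

Lemma kern_tail (del : R) : 0 < del ->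
  ((1 + del) * INR n < INR k \/ (1 + del) * INR k < INR n) ->
  kern r n k <= (1 - (ln 2 * del / (2 * (1 + del))) ^ 2) ^ (r - 1) * T.
Proof.
  intros Hd Hc. pose proof (T_tail del Hd Hc). pose proof T_range.
  unfold kern. fold u. fold T.
  replace r with (S (r - 1)) at 1 by lia. simpl. rewrite Rmult_comm.
  apply Rmult_le_compat_r; [lra|]. apply pow_incr. lra.
Qed.

Lemma kern_peak (RR : nat) : r = (RR * RR)%nat -> (n <= k)%nat ->
  2 * INR RR * (INR k - INR n) <= INR n -> 3 / 4 <= kern r n k.
Proof.
  intros HrR Hk Hw. pose proof nR_pos. pose proof ln2_bounds. pose proof u_range.
  assert (HRR : 1 <= INR RR).
  { destruct RR; [simpl in HrR; lia|]. rewrite S_INR. pose proof (pos_INR RR). lra. }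
  assert (HkR : INR n <= INR k) by (apply le_INR, Hk).
  assert (Hv : 0 <= 1 - 2 * u <= 1 / (2 * INR RR)).
  { assert (2 * u = exp (- ((INR k - INR n) * (ln 2 / INR n)))).
    { unfold u. rewrite u_exp. rewrite <- (exp_ln 2) at 1 by lra. rewrite <- exp_plus. f_equal. field. lra. }
    rewrite H2. split.
    - assert (exp (- ((INR k - INR n) * (ln 2 / INR n))) <= 1).
      { rewrite <- exp_0. apply exp_le_inv_le.
        assert (0 <= (INR k - INR n) * (ln 2 / INR n)) by (apply Rmult_le_pos; [lra|apply Rdiv_le_0_compat; lra]). lra. }
      lra.
    - eapply Rle_trans. apply one_minus_exp_upper.
      assert (INR k - INR n <= INR n / (2 * INR RR)).
      { apply Rmult_le_reg_r with (2 * INR RR); [lra|]. unfold Rdiv. rewrite Rmult_assoc, Rinv_l by lra. lra. }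
      assert (0 <= INR k - INR n) by lra.
      apply Rle_trans with ((INR n / (2 * INR RR)) * (ln 2 / INR n)).
      + apply Rmult_le_compat_r; [apply Rdiv_le_0_compat; lra|lra].
      + replace (INR n / (2 * INR RR) * (ln 2 / INR n)) with (ln 2 * (1 / (2 * INR RR))) by (field; lra).
        assert (0 < 1 / (2 * INR RR)) by (apply Rdiv_lt_0_compat; lra). nra. }
  assert (HT : 1 - 1 / (4 * INR r) <= T).
  { rewrite T_alt. rewrite HrR, mult_INR.
    assert ((1 - 2 * u) ^ 2 <= (1 / (2 * INR RR)) ^ 2) by (apply pow_incr; lra).
    replace ((1 / (2 * INR RR)) ^ 2) with (1 / (4 * (INR RR * INR RR))) in H2 by (field; lra). lra. }
  unfold kern. fold u. fold T.
  assert (HrR' : 1 <= INR r) by (apply (le_INR 1); lia).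
  pose proof (bernoulli_pow T r ltac:(pose proof T_range; lra)).
  assert (INR r * (1 - T) <= 1 / 4).
  { assert (1 - T <= 1 / (4 * INR r)) by lra.
    apply Rmult_le_compat_l with (r := INR r) in H3; [|lra].
    replace (INR r * (1 / (4 * INR r))) with (1/4) in H3 by (field; lra). lra. }
  lra.
Qed.

End Kern.

Section Tauber.
Variables (p : nat -> R) (l eps del : R) (N A0 RR : nat).
Hypothesis Heps : 0 < eps.
Hypothesis Hdel : 0 < del.
Hypothesis HW : forall n m : nat, (N <= n)%nat -> (n <= m)%nat ->
  INR m <= (1 + del) * INR n -> Rabs (p m - p n) < eps.
Hypothesis HNA : (N <= A0)%nat.
Hypothesis HdA : 1 <= del * INR A0.
Hypothesis HRR : (1 <= RR)%nat.

Definition rr := (RR * RR)%nat.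
Definition CC := 2 / del.
Definition e0 := ln 2 * del / (2 * (1 + del)).
Definition th := (1 - e0 ^ 2) ^ (rr - 1).
Definition MM := sum_n (fun i => Rabs (p i - p A0)) A0.
Definition alpha (n : nat) := 8 * eps * (1 + CC) + 8 * INR A0 * (MM + eps) / INR n.
Definition beta := 4 * CC * eps * (2 / ln 2).
Definition ww (n k : nat) := exp (- (INR k * (ln 2 / (2 * INR n)))).

Lemma rr_ge1 : (1 <= rr)%nat.
Proof. unfold rr. nia. Qed.

Lemma e0_range : 0 <= e0 <= / 2.
Proof.
  unfold e0. pose proof ln2_bounds. split.
  apply Rdiv_le_0_compat; nra.
  apply Rmult_le_reg_r with (2 * (1 + del)); [lra|]. unfold Rdiv.
  rewrite Rmult_assoc, Rinv_l by lra. nra.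
Qed.

Lemma th_nonneg : 0 <= th.
Proof. unfold th. pose proof e0_range. apply pow_le. nra. Qed.

Lemma MM_nonneg : 0 <= MM.
Proof.
  unfold MM. eapply Rle_trans; [|apply (term_le_sum _ A0 0)]; [apply Rabs_pos| |lia].
  intro; apply Rabs_pos.
Qed.

Lemma A0_pos : 1 <= INR A0.
Proof.
  destruct A0 as [|a]. simpl in HdA. lra. rewrite S_INR. pose proof (pos_INR a). lra.
Qed.

Lemma pointwise (n : nat) : (1 <= n)%nat -> (A0 <= n)%nat -> (1 + del) * INR A0 <= INR n ->
  forall k, kern rr n k * Rabs (p k - p n) <= eps * kern rr n k + th * (alpha n * xx n ^ k + beta * ww n k).
Proof.
  intros Hn HAn HlA k.
  assert (HnR : 1 <= INR n) by (apply (le_INR 1); lia).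
  pose proof (kern_T n k rr Hn rr_ge1) as HkT.
  pose proof (u_range n k Hn) as Hu.
  pose proof (T_le_u n k Hn) as HTu.
  pose proof (T_le_k n k rr Hn rr_ge1) as HTk.
  pose proof th_nonneg as Hth. pose proof ln2_bounds as Hl2.
  pose proof MM_nonneg as HM. pose proof A0_pos as HA.
  assert (HC : 0 < CC) by (unfold CC; apply Rdiv_lt_0_compat; lra).
  assert (Hw0 : 0 < ww n k) by (unfold ww; apply exp_pos).
  assert (Hal0 : 8 * eps * (1 + CC) <= alpha n).
  { unfold alpha. assert (0 <= 8 * INR A0 * (MM + eps) / INR n) by (apply Rdiv_le_0_compat; nra). lra. }
  assert (Hbe0 : 0 <= beta) by (unfold beta; apply Rmult_le_pos; [nra|apply Rdiv_le_0_compat; lra]).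
  assert (Hrest : 0 <= th * (alpha n * xx n ^ k + beta * ww n k)).
  { apply Rmult_le_pos; [exact Hth|].
    assert (0 <= 8 * eps * (1 + CC)) by nra.
    apply Rplus_le_le_0_compat; apply Rmult_le_pos; lra. }
  assert (HdAn : 1 <= del * INR n).
  { assert (INR A0 <= INR n) by (apply le_INR, HAn). nra. }
  assert (HNn : (N <= n)%nat) by lia.
  set (kk := kern rr n k) in *. set (u := xx n ^ k) in *.
  destruct (Rlt_dec ((1 + del) * INR n) (INR k)) as [HR|HR].
  -
    assert (Hkn : (n <= k)%nat).
    { apply INR_le. nra. }
    pose proof (chain p eps del N Heps Hdel HW n HNn HdAn k Hkn) as Hch.
    pose proof (kern_tail n k rr Hn rr_ge1 del Hdel (or_introl HR)) as Hkt.
    fold kk in Hkt. fold u in Hkt. fold e0 in Hkt. fold th in Hkt.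
    set (TT := 4 * u * (1 - u)) in *.
    assert (Hkk : kk <= th * (4 * u)).
    { eapply Rle_trans; [exact Hkt|]. apply Rmult_le_compat_l; [exact Hth|exact HTu]. }
    pose proof (ku_le_w n k rr Hn rr_ge1) as Hkw. fold u in Hkw.
    assert (Habs0 : 0 <= Rabs (p k - p n)) by apply Rabs_pos.
    assert (kk * Rabs (p k - p n) <= th * (4 * u) * (eps * (1 + 2 / del * INR k / INR n))).
    { apply Rmult_le_compat; [tauto|exact Habs0|exact Hkk|exact Hch]. }
    assert (E : th * (4 * u) * (eps * (1 + 2 / del * INR k / INR n))
               = th * (4 * eps * u + 4 * CC * eps * (INR k / INR n * u))) by (unfold CC; field; lra).
    assert (4 * CC * eps * (INR k / INR n * u) <= beta * ww n k).
    { assert (Hq : 4 * CC * eps * (INR k / INR n * u) <= 4 * CC * eps * (2 / ln 2 * exp (- (INR k * (ln 2 / (2 * INR n))))))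
        by (apply Rmult_le_compat_l; [nra|exact Hkw]).
      unfold beta, ww. replace (4 * CC * eps * (2 / ln 2) * exp (- (INR k * (ln 2 / (2 * INR n))))) with (4 * CC * eps * (2 / ln 2 * exp (- (INR k * (ln 2 / (2 * INR n)))))) by ring. exact Hq. }
    assert (4 * eps * u <= alpha n * u) by (apply Rmult_le_compat_r; nra).
    assert (th * (4 * eps * u + 4 * CC * eps * (INR k / INR n * u)) <= th * (alpha n * u + beta * ww n k)).
    { apply Rmult_le_compat_l; [exact Hth|lra]. }
    assert (0 <= eps * kk) by nra. lra.
  - destruct (Rlt_dec ((1 + del) * INR k) (INR n)) as [HL|HL].
    +
      assert (Hkn : (k <= n)%nat).
      { apply INR_le. pose proof (pos_INR k). nra. }
      pose proof (kern_tail n k rr Hn rr_ge1 del Hdel (or_intror HL)) as Hkt.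
      fold kk in Hkt. fold u in Hkt. fold e0 in Hkt. fold th in Hkt.
      set (TT := 4 * u * (1 - u)) in *.
      assert (Hkk : kk <= th * (4 * (INR k / INR n))).
      { eapply Rle_trans; [exact Hkt|]. apply Rmult_le_compat_l; [exact Hth|exact HTk]. }
      pose proof (u_half n k rr Hn rr_ge1 Hkn) as Hu2. fold u in Hu2.
      assert (HkR : 0 <= INR k) by apply pos_INR.
      assert (HknR : INR k <= INR n) by (apply le_INR, Hkn).
      destruct (le_lt_dec A0 k) as [HAk|HAk].
      * assert (HNk : (N <= k)%nat) by lia.
        assert (HdAk : 1 <= del * INR k).
        { assert (INR A0 <= INR k) by (apply le_INR, HAk). nra. }
        assert (HkR' : 0 < INR k) by nra.
        pose proof (chain p eps del N Heps Hdel HW k HNk HdAk n Hkn) as Hch.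
        rewrite <- Rabs_Ropp in Hch. replace (- (p n - p k)) with (p k - p n) in Hch by ring.
        assert (kk * Rabs (p k - p n) <= th * (4 * (INR k / INR n)) * (eps * (1 + 2 / del * INR n / INR k))).
        { apply Rmult_le_compat; [tauto|apply Rabs_pos|exact Hkk|exact Hch]. }
        assert (E : th * (4 * (INR k / INR n)) * (eps * (1 + 2 / del * INR n / INR k))
                  = th * (4 * eps * (INR k / INR n) + 4 * eps * CC)) by (unfold CC; field; lra).
        assert (INR k / INR n <= 1).
        { apply Rmult_le_reg_r with (INR n); [lra|]. unfold Rdiv. rewrite Rmult_assoc, Rinv_l by lra. lra. }
        assert (4 * eps * (INR k / INR n) + 4 * eps * CC <= alpha n * u).
        { assert (4 * eps * (INR k / INR n) + 4 * eps * CC <= 4 * eps * (1 + CC)) by nra.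
          assert (8 * eps * (1 + CC) * u <= alpha n * u) by (apply Rmult_le_compat_r; lra).
          assert (0 < eps * (1 + CC)) by nra.
          assert (4 * eps * (1 + CC) <= 8 * eps * (1 + CC) * u) by nra.
          lra. }
        assert (th * (4 * eps * (INR k / INR n) + 4 * eps * CC) <= th * (alpha n * u + beta * ww n k)).
        { apply Rmult_le_compat_l; [exact Hth|]. nra. }
        assert (0 <= eps * kk) by nra. lra.
      *
        assert (HkA : (k <= A0)%nat) by lia.
        assert (H1 : Rabs (p k - p A0) <= MM).
        { unfold MM. apply (term_le_sum (fun i => Rabs (p i - p A0)) A0 k); [intro; apply Rabs_pos|exact HkA]. }
        pose proof (chain p eps del N Heps Hdel HW A0 HNA HdA n HAn) as Hch.
        assert (H2 : Rabs (p k - p n) <= MM + eps * (1 + 2 / del * INR n / INR A0)).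
        { pose proof (Rabs_triang (p k - p A0) (p A0 - p n)).
          replace (p k - p A0 + (p A0 - p n)) with (p k - p n) in H by ring.
          rewrite <- Rabs_Ropp in Hch. replace (- (p n - p A0)) with (p A0 - p n) in Hch by ring. lra. }
        assert (HkA' : INR k <= INR A0) by (apply le_INR; lia).
        assert (Hkk2 : kk <= th * (4 * (INR A0 / INR n))).
        { eapply Rle_trans; [exact Hkk|]. apply Rmult_le_compat_l; [exact Hth|].
          apply Rmult_le_compat_l; [lra|]. unfold Rdiv. apply Rmult_le_compat_r; [left; apply Rinv_0_lt_compat; lra|lra]. }
        assert (kk * Rabs (p k - p n) <= th * (4 * (INR A0 / INR n)) * (MM + eps * (1 + 2 / del * INR n / INR A0))).
        { apply Rmult_le_compat; [tauto|apply Rabs_pos|exact Hkk2|exact H2]. }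
        assert (E : th * (4 * (INR A0 / INR n)) * (MM + eps * (1 + 2 / del * INR n / INR A0))
                  = th * (4 * INR A0 * (MM + eps) / INR n + 4 * eps * CC)) by (unfold CC; field; lra).
        assert (4 * INR A0 * (MM + eps) / INR n + 4 * eps * CC <= alpha n * u).
        { assert (Hpos : 0 <= 8 * INR A0 * (MM + eps) / INR n) by (apply Rdiv_le_0_compat; nra).
          assert (HH : 4 * INR A0 * (MM + eps) / INR n = / 2 * (8 * INR A0 * (MM + eps) / INR n)) by (field; lra).
          unfold alpha. rewrite HH. set (X := 8 * INR A0 * (MM + eps) / INR n) in *.
          assert (0 <= 8 * eps * (1 + CC)) by nra.
          assert ((8 * eps * (1 + CC) + X) * / 2 <= (8 * eps * (1 + CC) + X) * u)
            by (apply Rmult_le_compat_l; lra).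
          assert (0 <= eps * CC) by nra. lra. }
        assert (th * (4 * INR A0 * (MM + eps) / INR n + 4 * eps * CC) <= th * (alpha n * u + beta * ww n k)).
        { apply Rmult_le_compat_l; [exact Hth|]. nra. }
        assert (0 <= eps * kk) by nra. lra.
    +
      assert (Hw : Rabs (p k - p n) < eps).
      { destruct (le_lt_dec n k) as [Hnk|Hnk].
        - apply HW; [exact HNn|exact Hnk|lra].
        - rewrite <- Rabs_Ropp. replace (- (p k - p n)) with (p n - p k) by ring.
          assert (HAk : (A0 <= k)%nat).
          { apply INR_le. nra. }
          apply HW; [lia|lia|lra]. }
      assert (kk * Rabs (p k - p n) <= kk * eps) by (apply Rmult_le_compat_l; [tauto|lra]).
      lra.
Qed.


Lemma sum_window (a : nat -> R) (c : R) (n h : nat) :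
  (forall k, 0 <= a k) -> (forall k, (n <= k)%nat -> (k <= n + h)%nat -> c <= a k) ->
  INR (S h) * c <= sum_n a (n + h).
Proof.
  intros Hp Hc. induction h as [|h IH].
  - rewrite Nat.add_0_r. simpl. rewrite Rmult_1_l.
    apply Rle_trans with (a n); [apply Hc; lia|]. apply term_le_sum; [exact Hp|lia].
  - replace (n + S h)%nat with (S (n + h)) by lia. rewrite sum_Sn.
    replace (plus (sum_n a (n + h)) (a (S (n + h)))) with (sum_n a (n + h) + a (S (n + h))) by reflexivity.
    rewrite S_INR, Rmult_plus_distr_r, Rmult_1_l.
    assert (c <= a (S (n + h))) by (apply Hc; lia).
    assert (INR (S h) * c <= sum_n a (n + h)) by (apply IH; intros; apply Hc; lia).
    lra.
Qed.

Lemma kern_ex (r n : nat) : (1 <= n)%nat -> (1 <= r)%nat -> ex_series (kern r n).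
Proof.
  intros Hn Hr. destruct (xx_bounds n Hn) as [[H0 H1] _].
  apply ex_series_le_R with (b := fun k => 4 * xx n ^ k).
  - intro k. pose proof (kern_T n k r Hn Hr). pose proof (T_le_u n k Hn).
    rewrite Rabs_right by lra. lra.
  - exists (4 * / (1 - xx n)). apply is_series_scal_R, geom_series. lra.
Qed.

Lemma Z_lower (n : nat) : (1 <= n)%nat ->
  3 * INR n / (8 * INR RR) <= Series (kern rr n).
Proof.
  intro Hn.
  assert (HR : 1 <= INR RR) by (apply (le_INR 1); lia).
  set (h := (n / (2 * RR))%nat).
  assert (Hdm := Nat.div_mod n (2 * RR) ltac:(lia)).
  assert (Hml := Nat.mod_upper_bound n (2 * RR) ltac:(lia)). fold h in Hdm.
  assert (Hwin := sum_window (kern rr n) (3/4) n h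
    (fun k => proj1 (kern_T n k rr Hn rr_ge1))).
  assert (Hs : INR (S h) * (3 / 4) <= sum_n (kern rr n) (n + h)).
  { apply Hwin. intros k Hk1 Hk2. apply (kern_peak n k rr Hn rr_ge1 RR); [reflexivity|exact Hk1|].
    assert (Hkn : (2 * RR * (k - n) <= n)%nat) by nia.
    apply le_INR in Hkn. rewrite !mult_INR, minus_INR in Hkn by lia. replace (INR 2) with 2 in Hkn by (simpl; lra). lra. }
  assert (Hp := partial_le_Series (kern rr n) (n + h) (fun k => proj1 (kern_T n k rr Hn rr_ge1)) (kern_ex rr n Hn rr_ge1)).
  assert (Hh : INR n <= 2 * INR RR * INR (S h)).
  { assert (n <= 2 * RR * S h)%nat by nia. apply le_INR in H. rewrite !mult_INR in H. replace (INR 2) with 2 in H by (simpl; lra). lra. }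
  assert (3 * INR n / (8 * INR RR) <= INR (S h) * (3 / 4)).
  { apply Rmult_le_reg_r with (8 * INR RR); [lra|]. unfold Rdiv. rewrite Rmult_assoc, Rinv_l by lra. nra. }
  lra.
Qed.

Lemma ww_geom (n k : nat) : ww n k = xx (2 * n) ^ k.
Proof. rewrite u_exp. unfold ww. rewrite mult_INR. reflexivity. Qed.

Hypothesis Ha : abel_convergent p l.

Lemma est (n : nat) : (1 <= n)%nat -> (A0 <= n)%nat -> (1 + del) * INR A0 <= INR n ->
  Rabs (p n - l) * Series (kern rr n) <=
  Rabs (Series (fun k => kern rr n k * (p k - l))) + eps * Series (kern rr n)
  + th * (alpha n * (4 * INR n) + beta * (8 * INR n)).
Proof.
  intros Hn HAn HlA.
  assert (HnR : 1 <= INR n) by (apply (le_INR 1); lia).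
  assert (Hn2 : (1 <= 2 * n)%nat) by lia.
  destruct (xx_bounds n Hn) as [[Hx0 Hx1] [Hxlo _]].
  destruct (xx_bounds (2 * n) Hn2) as [[Hy0 Hy1] [Hylo _]].
  rewrite mult_INR in Hylo. simpl (INR 2) in Hylo.
  pose proof ln2_bounds as Hl2.
  set (b := fun k => eps * kern rr n k + th * (alpha n * xx n ^ k + beta * ww n k)).
  assert (Hb : is_series b (eps * Series (kern rr n) + th * (alpha n * / (1 - xx n) + beta * / (1 - xx (2 * n))))).
  { apply is_series_plus_R. apply is_series_scal_R, Series_correct, kern_ex; [exact Hn|exact rr_ge1].
    apply is_series_scal_R. apply is_series_plus_R.
    apply is_series_scal_R, geom_series; lra.
    apply is_series_scal_R. apply (is_series_ext_R (fun k => xx (2 * n) ^ k)).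
    intro k; rewrite ww_geom; reflexivity. apply geom_series; lra. }
  assert (Hpt := pointwise n Hn HAn HlA).
  assert (HD : ex_series (fun k => kern rr n k * (p n - p k))).
  { apply ex_series_le_R with b; [|eexists; exact Hb]. intro k.
    rewrite Rabs_mult, Rabs_right by (pose proof (kern_T n k rr Hn rr_ge1); lra).
    rewrite <- Rabs_Ropp. replace (- (p n - p k)) with (p k - p n) by ring. apply Hpt. }
  assert (HDabs : Rabs (Series (fun k => kern rr n k * (p n - p k))) <= Series b).
  { eapply Rle_trans. apply Series_Rabs.
    apply ex_series_le_R with b; [|eexists; exact Hb]. intro k. rewrite Rabs_Rabsolu.
    rewrite Rabs_mult, Rabs_right by (pose proof (kern_T n k rr Hn rr_ge1); lra).
    rewrite <- Rabs_Ropp. replace (- (p n - p k)) with (p k - p n) by ring. apply Hpt.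
    apply Series_le; [|eexists; exact Hb]. intro k. split; [apply Rabs_pos|].
    rewrite Rabs_mult, Rabs_right by (pose proof (kern_T n k rr Hn rr_ge1); lra).
    rewrite <- Rabs_Ropp. replace (- (p n - p k)) with (p k - p n) by ring. apply Hpt. }
  assert (HS : ex_series (fun k => kern rr n k * (p k - l))).
  { eexists. apply S_series; [exact Ha|exact rr_ge1|exact Hn]. }
  assert (Hsplit : Series (kern rr n) * (p n - l) =
     Series (fun k => kern rr n k * (p k - l)) + Series (fun k => kern rr n k * (p n - p k))).
  { rewrite <- Series_plus by assumption. rewrite <- Series_scal_r. apply Series_ext. intro; ring. }
  assert (HZ : 0 <= Series (kern rr n)).
  { apply Series_nonneg. intro k; apply (kern_T n k rr Hn rr_ge1). apply kern_ex; [exact Hn|exact rr_ge1]. }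
  assert (Hi1 : / (1 - xx n) <= 4 * INR n).
  { assert (Hq : / (4 * INR n) <= 1 - xx n).
    { eapply Rle_trans; [|exact Hxlo]. unfold Rdiv. rewrite Rinv_mult.
      rewrite Rinv_mult. 
      assert (0 < / INR n) by (apply Rinv_0_lt_compat; lra).
      assert (/ 4 <= ln 2 * / 2) by lra. nra. }
    replace (4 * INR n) with (/ / (4 * INR n)) by (field; lra).
    apply Rinv_le_contravar; [apply Rinv_0_lt_compat; lra|exact Hq]. }
  assert (Hi2 : / (1 - xx (2 * n)) <= 8 * INR n).
  { assert (Hq : / (8 * INR n) <= 1 - xx (2 * n)).
    { eapply Rle_trans; [|exact Hylo]. rewrite !Rinv_mult. unfold Rdiv. rewrite !Rinv_mult.
      assert (0 < / INR n) by (apply Rinv_0_lt_compat; lra).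
      assert (/ 8 <= ln 2 * (/ 2 * / 2)) by lra. nra. }
    replace (8 * INR n) with (/ / (8 * INR n)) by (field; lra).
    apply Rinv_le_contravar; [apply Rinv_0_lt_compat; lra|exact Hq]. }
  assert (Hal : 0 <= alpha n).
  { unfold alpha. pose proof MM_nonneg. pose proof A0_pos.
    assert (0 <= CC) by (unfold CC; apply Rdiv_le_0_compat; lra).
    assert (0 <= 8 * INR A0 * (MM + eps) / INR n) by (apply Rdiv_le_0_compat; nra). nra. }
  assert (Hbe : 0 <= beta).
  { unfold beta. assert (0 <= CC) by (unfold CC; apply Rdiv_le_0_compat; lra).
    apply Rmult_le_pos; [nra|apply Rdiv_le_0_compat; lra]. }
  pose proof th_nonneg.
  assert (alpha n * / (1 - xx n) + beta * / (1 - xx (2 * n)) <= alpha n * (4 * INR n) + beta * (8 * INR n)).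
  { apply Rplus_le_compat; apply Rmult_le_compat_l; assumption. }
  assert (th * (alpha n * / (1 - xx n) + beta * / (1 - xx (2 * n))) <= th * (alpha n * (4 * INR n) + beta * (8 * INR n)))
    by (apply Rmult_le_compat_l; assumption).
  rewrite (is_series_unique _ _ Hb) in HDabs.
  assert (Rabs (p n - l) * Series (kern rr n) = Rabs (Series (kern rr n) * (p n - l))).
  { rewrite Rabs_mult, (Rabs_right (Series (kern rr n))) by lra. ring. }
  rewrite H2, Hsplit.
  pose proof (Rabs_triang (Series (fun k => kern rr n k * (p k - l))) (Series (fun k => kern rr n k * (p n - p k)))).
  lra.
Qed.


Lemma tauber_eps : th * (36 + 160 * CC) <= 3 / (8 * INR RR) ->
  exists n0, forall n, (n0 <= n)%nat -> Rabs (p n - l) <= 3 * eps.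
Proof.
  intro Hbig.
  assert (HR : 1 <= INR RR) by (apply (le_INR 1); lia).
  pose proof ln2_bounds as Hl2. pose proof MM_nonneg as HM. pose proof A0_pos as HA.
  assert (HC : 0 < CC) by (unfold CC; apply Rdiv_lt_0_compat; lra).
  pose proof th_nonneg as Hth.
  assert (He' : 0 < eps * 3 / (32 * INR RR)) by (apply Rdiv_lt_0_compat; lra).
  destruct (lim_seq_elim _ _ (S_lim p l rr Ha rr_ge1) _ He') as [N1 HN1].
  destruct (nfloor_ex (8 * INR A0 * (MM + eps) / eps)) as [n1 Hn1].
  { apply Rdiv_le_0_compat; nra. }
  destruct (nfloor_ex ((1 + del) * INR A0)) as [n2 Hn2]. { nra. }
  exists (N1 + S n1 + S n2 + A0 + 1)%nat. intros n Hn.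
  assert (Hn1' : (1 <= n)%nat) by lia.
  assert (HnR : 1 <= INR n) by (apply (le_INR 1); lia).
  assert (HAn : (A0 <= n)%nat) by lia.
  assert (HlA : (1 + del) * INR A0 <= INR n).
  { assert (S n2 <= n)%nat by lia. apply le_INR in H. rewrite S_INR in H. lra. }
  assert (Hn1R : 8 * INR A0 * (MM + eps) / eps < INR n).
  { assert (S n1 <= n)%nat by lia. apply le_INR in H. rewrite S_INR in H. lra. }
  pose proof (est n Hn1' HAn HlA) as Hest.
  pose proof (Z_lower n Hn1') as HZ.
  set (Z := Series (kern rr n)) in *.
  set (S := Series (fun k => kern rr n k * (p k - l))) in *.
  assert (HZ0 : 0 < Z).
  { eapply Rlt_le_trans; [|exact HZ]. apply Rdiv_lt_0_compat; lra. }
  assert (H3n : eps * (3 * INR n / (8 * INR RR)) <= eps * Z) by (apply Rmult_le_compat_l; lra).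
  assert (HS : Rabs S <= eps * Z).
  { specialize (HN1 n ltac:(lia)). rewrite Rminus_0_r in HN1. fold S in HN1.
    destruct (xx_bounds n Hn1') as [[Hx0 Hx1] [Hxlo _]].
    assert (Hq : / (4 * INR n) <= 1 - xx n).
    { eapply Rle_trans; [|exact Hxlo]. unfold Rdiv. rewrite !Rinv_mult.
      assert (0 < / INR n) by (apply Rinv_0_lt_compat; lra).
      assert (/ 4 <= ln 2 * / 2) by lra. nra. }
    rewrite Rabs_mult, (Rabs_right (1 - xx n)) in HN1 by lra.
    assert (Rabs S <= 4 * INR n * ((1 - xx n) * Rabs S)).
    { assert (1 <= 4 * INR n * (1 - xx n)).
      { apply Rmult_le_compat_l with (r := 4 * INR n) in Hq; [|lra].
        rewrite Rinv_r in Hq by lra. exact Hq. }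
      pose proof (Rabs_pos S). nra. }
    assert (4 * INR n * ((1 - xx n) * Rabs S) <= 4 * INR n * (eps * 3 / (32 * INR RR))).
    { apply Rmult_le_compat_l; lra. }
    replace (4 * INR n * (eps * 3 / (32 * INR RR))) with (eps * (3 * INR n / (8 * INR RR))) in H0 by (field; lra).
    lra. }
  assert (Hal : alpha n <= eps * (9 + 8 * CC)).
  { unfold alpha.
    assert (8 * INR A0 * (MM + eps) / INR n <= eps).
    { apply Rmult_le_reg_r with (INR n); [lra|]. unfold Rdiv at 1. rewrite Rmult_assoc, Rinv_l by lra.
      apply Rmult_lt_compat_r with (r := eps) in Hn1R; [|lra].
      unfold Rdiv in Hn1R. rewrite Rmult_assoc, Rinv_l in Hn1R by lra. lra. }
    lra. }
  assert (Hbe : beta <= 16 * CC * eps).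
  { unfold beta. assert (2 / ln 2 <= 4).
    { apply Rmult_le_reg_r with (ln 2); [lra|]. unfold Rdiv. rewrite Rmult_assoc, Rinv_l by lra. lra. }
    assert (0 < 4 * CC * eps) by nra. nra. }
  assert (Hbe0 : 0 <= beta).
  { unfold beta. apply Rmult_le_pos; [nra|apply Rdiv_le_0_compat; lra]. }
  assert (Htail : th * (alpha n * (4 * INR n) + beta * (8 * INR n)) <= eps * Z).
  { assert (alpha n * (4 * INR n) + beta * (8 * INR n) <= (36 + 160 * CC) * eps * INR n).
    { assert (alpha n * (4 * INR n) <= eps * (9 + 8 * CC) * (4 * INR n)) by (apply Rmult_le_compat_r; lra).
      assert (beta * (8 * INR n) <= 16 * CC * eps * (8 * INR n)) by (apply Rmult_le_compat_r; lra).
      lra. }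
    assert (th * (alpha n * (4 * INR n) + beta * (8 * INR n)) <= th * ((36 + 160 * CC) * eps * INR n))
      by (apply Rmult_le_compat_l; lra).
    assert (th * (36 + 160 * CC) * (eps * INR n) <= 3 / (8 * INR RR) * (eps * INR n))
      by (apply Rmult_le_compat_r; [nra|exact Hbig]).
    replace (3 / (8 * INR RR) * (eps * INR n)) with (eps * (3 * INR n / (8 * INR RR))) in H1 by (field; lra).
    lra. }
  assert (Rabs (p n - l) * Z <= 3 * eps * Z) by lra.
  apply Rmult_le_reg_r with Z; lra.
Qed.

End Tauber.

Lemma pow_decay (a : R) (m : nat) : 0 <= a <= 1 -> (1 - a) ^ m * (1 + a * INR m) <= 1.
Proof.
  intro Ha.
  assert (H1 : 1 + a * INR m <= (1 + a) ^ m).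
  { pose proof (bernoulli_pow (1 + a) m ltac:(lra)). lra. }
  assert (H2 : (1 - a) ^ m * (1 + a) ^ m <= 1).
  { rewrite <- Rpow_mult_distr. apply pow_le1. nra. }
  assert (0 <= (1 - a) ^ m) by (apply pow_le; lra).
  assert ((1 - a) ^ m * (1 + a * INR m) <= (1 - a) ^ m * (1 + a) ^ m) by (apply Rmult_le_compat_l; lra).
  lra.
Qed.

Theorem tauber (p : nat -> R) (l : R) :
  slowly_oscillating p -> abel_convergent p l -> is_lim_seq p l.
Proof.
  intros Hso Ha. apply lim_seq_intro. intros e He.
  set (eps := e / 4).
  assert (Heps : 0 < eps) by (unfold eps; lra).
  destruct (Hso eps Heps) as [del [Hdel [N [HN HW]]]].
  destruct (nfloor_ex (/ del)) as [q Hq]. { left; apply Rinv_0_lt_compat; lra. }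
  set (A0 := (N + S q)%nat).
  assert (HNA : (N <= A0)%nat) by (unfold A0; lia).
  assert (HdA : 1 <= del * INR A0).
  { unfold A0. rewrite plus_INR, S_INR. pose proof (pos_INR N).
    assert (/ del <= INR q + 1) by lra.
    apply Rmult_le_compat_l with (r := del) in H0; [|lra]. rewrite Rinv_r in H0 by lra. nra. }
  pose proof (e0_range del Hdel) as He0.
  assert (He0p : 0 < e0 del).
  { unfold e0. pose proof ln2_bounds. apply Rdiv_lt_0_compat; nra. }
  assert (HC : 0 < CC del) by (unfold CC; apply Rdiv_lt_0_compat; lra).
  set (X := 36 + 160 * CC del).
  set (K := X * 8 / (3 * e0 del ^ 2)).
  assert (HK : 0 <= K).
  { unfold K, X. apply Rdiv_le_0_compat; [lra|]. assert (0 < e0 del ^ 2) by (apply pow_lt; lra). lra. }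
  destruct (nfloor_ex K HK) as [k0 Hk0].
  set (RR := S (S k0)).
  assert (HRR : (1 <= RR)%nat) by (unfold RR; lia).
  assert (HRK : K + 1 <= INR RR) by (unfold RR; rewrite !S_INR; lra).
  assert (Hbig : th del RR * X <= 3 / (8 * INR RR)).
  { set (a := e0 del ^ 2).
    assert (Ha0 : 0 < a) by (unfold a; apply pow_lt; lra).
    assert (Ha1 : a <= 1) by (unfold a; simpl; nra).
    pose proof (pow_decay a (rr RR - 1) ltac:(lra)) as Hd.
    assert (Hrr : INR (rr RR - 1) = INR RR * INR RR - 1).
    { unfold rr. rewrite minus_INR by nia. rewrite mult_INR. simpl. ring. }
    rewrite Hrr in Hd. fold a in Hd.
    assert (Hth : th del RR * (1 + a * (INR RR * INR RR - 1)) <= 1) by exact Hd.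
    assert (HR1 : 1 <= INR RR) by (apply (le_INR 1); lia).
    assert (HX : 0 < X) by (unfold X; lra).
    assert (HKa : X * 8 / 3 = K * a) by (unfold K, a; field; lra).
    assert (Hmain : X * 8 * INR RR / 3 <= 1 + a * (INR RR * INR RR - 1)).
    { assert (K * a * INR RR <= a * (INR RR * INR RR - 1)).
      { assert (K <= INR RR - 1) by lra.
        assert (a * (INR RR * INR RR - 1) >= a * (INR RR * (INR RR - 1))) by nra.
        assert (K * INR RR <= (INR RR - 1) * INR RR) by nra. nra. }
      replace (X * 8 * INR RR / 3) with (X * 8 / 3 * INR RR) by (field).
      rewrite HKa. lra. }
    pose proof (th_nonneg del RR Hdel) as Ht0.
    assert (Hpos : 0 < 1 + a * (INR RR * INR RR - 1)) by nra.
    apply Rmult_le_reg_r with (8 * INR RR / 3); [lra|].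
    replace (3 / (8 * INR RR) * (8 * INR RR / 3)) with 1 by (field; lra).
    replace (th del RR * X * (8 * INR RR / 3)) with (th del RR * (X * 8 * INR RR / 3)) by (field).
    apply Rle_trans with (th del RR * (1 + a * (INR RR * INR RR - 1))); [|exact Hth].
    apply Rmult_le_compat_l; lra. }
  destruct (tauber_eps p l eps del N A0 RR Heps Hdel HW HNA HdA HRR Ha Hbig) as [n0 Hn0].
  exists n0. intros n Hn. specialize (Hn0 n Hn). unfold eps in Hn0. lra.
Qed.

Theorem corollary4 (f : R -> R) (p : nat -> R) :
  abel_continuous f ->
  slowly_oscillating p ->
  (exists l : R, abel_convergent p l) ->
  ex_finite_lim_seq (fun n => f (p n)).
Proof.
  intros Hf Hso [l Hl].
  exists (f l). apply f_lim; [exact Hf|]. apply tauber; assumption.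
Qed.
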